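(* Let $R$ be a ring, let $B$ be a ring, and let $A$ be an $R$-subalgebra of $B$, so that we have ring morphisms $R \xrightarrow{\tau} A \xrightarrow{g} B$ with $g$ the inclusion. Let $A^* = A^*_{B,R}$ denote the Lipschitz saturation of $A$ in $B$ relative to $R \to A \to B$. Then: (1) $A \subseteq A^*$; (2) $(A^* )^* = A^*$, where $(A^* )^*$ denotes the Lipschitz saturation of $A^*$ in $B$ relative to the sequence $R \to A^* \hookrightarrow B$ (with $R \to A^*$ the composite of $\tau$ and the inclusion $A \subseteq A^*$, and $A^* \hookrightarrow B$ the inclusion).
   Context: All rings are commutative with identity. For a sequence of ring morphisms $R \xrightarrow{\tau} A \xrightarrow{g} B$ (so $A$ and $B$ are $R$-algebras and $B$ is an $A$-algebra), let $\varphi: B\otimes_R B \to B \otimes_A B$ be the canonical $R$-algebra morphism $x\otimes_R y \mapsto x \otimes_A y$, and let $\Delta: B \to B\otimes_R B$, $\Delta(b) = b\otimes_R 1 - 1 \otimes_R b$. The Lipschitz saturation of $A$ in $B$ relative to $R\to A\to B$ is $A^*_{B,R} := \{x \in B \mid \Delta(x) \in \overline{\ker\varphi}\}$, where for an ideal $I$ of a ring $S$, $\overline{I}$ denotes the integral closure of the ideal $I$, i.e. the set of $u\in S$ satisfying an equation $u^n + a_1u^{n-1}+\cdots+a_n = 0$ with $a_i \in I^i$. (It is an $R$-subalgebra of $B$ containing $g(A)$.) *)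

(* Defs.v *)
From HB Require Import structures.
From mathcomp Require Import all_boot all_order all_algebra.
Set Implicit Arguments. Unset Strict Implicit. Unset Printing Implicit Defensive.
Import GRing.Theory.
Local Open Scope ring_scope.

Fixpoint ideal_pow (T : comPzRingType) (I : T -> Prop) (n : nat) : T -> Prop :=
  match n with
  | 0 => fun _ => True
  | n'.+1 => fun x => exists s : seq (T * T),
      (forall p, p \in s -> I p.1 /\ ideal_pow I n' p.2) /\
      x = \sum_(p <- s) p.1 * p.2
  end.

Definition int_closure (T : comPzRingType) (I : T -> Prop) (u : T) : Prop :=
  exists (n : nat) (a : nat -> T),
    (0 < n)%N /\ (forall i, (1 <= i <= n)%N -> ideal_pow I i (a i)) /\
    u ^+ n + \sum_(1 <= i < n.+1) a i * u ^+ (n - i) = 0.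

(* (T, j1, j2) is the tensor product B (x)_S B of B with itself over the
   subring S of B, characterised (up to unique isomorphism) as the pushout
   of B <- S -> B in commutative rings: j1 b = b (x) 1, j2 b = 1 (x) b. *)
Definition is_tensor (B : comPzRingType) (S : B -> Prop) (T : comPzRingType)
    (j1 j2 : {rmorphism B -> T}) : Prop :=
  (forall s, S s -> j1 s = j2 s) /\
  forall (T' : comPzRingType) (f1 f2 : {rmorphism B -> T'}),
    (forall s, S s -> f1 s = f2 s) ->
    exists h : {rmorphism T -> T'},
      ((forall b, h (j1 b) = f1 b) /\ (forall b, h (j2 b) = f2 b)) /\
      forall h' : {rmorphism T -> T'},
        (forall b, h' (j1 b) = f1 b) -> (forall b, h' (j2 b) = f2 b) ->
        forall t, h' t = h t.

(* Lipschitz saturation: x in B with Delta(x) = x(x)1 - 1(x)x in the integral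
   closure of ker phi, where phi : B(x)_R B -> B(x)_A B is the canonical map. *)
Definition lip_sat (B T1 T2 : comPzRingType) (d1 d2 : B -> T1) (phi : T1 -> T2)
    (x : B) : Prop :=
  int_closure (fun t => phi t = 0) (d1 x - d2 x).

(* Main.v *)
Require Import Defs.
From HB Require Import structures.
From mathcomp Require Import all_boot all_order all_algebra.
From mathcomp Require Import ring_quotient generic_quotient.
From Stdlib Require Import ClassicalEpsilon Classical.
Import GRing.Theory.
Local Open Scope ring_scope.

Set Implicit Arguments. Unset Strict Implicit. Unset Printing Implicit Defensive.
Section NZ.
Variable T : comPzRingType.
Hypothesis h : (1:T) != 0.
Definition nzw : Type := let _ := h in T.
HB.instance Definition _ := GRing.ComPzRing.on nzw.
HB.instance Definition _ := GRing.PzSemiRing_isNonZero.Build nzw h.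
End NZ.

Definition pdec (P : Prop) : bool := if excluded_middle_informative P then true else false.
Lemma pdecP P : reflect P (pdec P).
Proof. rewrite /pdec; case: excluded_middle_informative => H; constructor; done. Qed.

Section Sub.
Variable K : comNzRingType.
Variable P : K -> Prop.
Hypothesis Pc : P 1 /\ (forall x y, P x -> P y -> P (x - y)) /\ (forall x y, P x -> P y -> P (x * y)).
Definition Pb : {pred K} := let _ := Pc in fun x => pdec (P x).
Lemma Pb_closed : subring_closed Pb.
Proof.
case: Pc => P1 [PB PM].
split; rewrite /Pb /in_mem /=.
- exact/pdecP.
- by move=> x y /pdecP Hx /pdecP Hy; apply/pdecP; auto.
- by move=> x y /pdecP Hx /pdecP Hy; apply/pdecP; auto.
Qed.
HB.instance Definition _ := GRing.isSubringClosed.Build K Pb Pb_closed.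
Record subP := SubP { sval : K; _ : sval \in Pb }.
HB.instance Definition _ := [isSub for sval].
HB.instance Definition _ := [Choice of subP by <:].
HB.instance Definition _ := [SubChoice_isSubComNzRing of subP by <:].
Definition svalr : {rmorphism subP -> K} := GRing.RMorphism.clone _ _ (val : subP -> K) _.
Lemma svalr_im x : P x -> exists y, svalr y = x.
Proof. move=> Px. have H : x \in Pb by rewrite /Pb /in_mem /=; apply/pdecP. by exists (SubP H). Qed.
Lemma svalr_P y : P (svalr y).
Proof. case: y => x /= H. by move: H; rewrite /Pb /in_mem /= => /pdecP. Qed.
End Sub.
Section IP.
Variables (T : comPzRingType) (I : T -> Prop).
Hypothesis I0 : I 0.
Hypothesis IB : forall x y, I x -> I y -> I (x - y).
Hypothesis IM : forall a x, I x -> I (a * x).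

Lemma ip0 n : ideal_pow I n 0.
Proof. case: n => //= n; exists [::]; split => //; by rewrite big_nil. Qed.

Lemma ipD n x y : ideal_pow I n x -> ideal_pow I n y -> ideal_pow I n (x + y).
Proof.
case: n => // n [s [Hs ->]] [t [Ht ->]]; exists (s ++ t); split; last by rewrite big_cat.
by move=> p; rewrite mem_cat => /orP[]; auto.
Qed.

Lemma ipMl n a x : ideal_pow I n x -> ideal_pow I n (a * x).
Proof.
case: n => // n [s [Hs ->]]; exists [seq (a * p.1, p.2) | p <- s]; split.
  move=> p /mapP [q qs ->] /=; have [H1 H2] := Hs q qs; split; auto.
by rewrite big_map mulr_sumr; apply: eq_bigr => p _ /=; rewrite mulrA.
Qed.

Lemma ipB n x y : ideal_pow I n x -> ideal_pow I n y -> ideal_pow I n (x - y).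
Proof. by move=> Hx Hy; apply: ipD => //; rewrite -mulN1r; apply: ipMl. Qed.

Lemma ipM m n x y : ideal_pow I m x -> ideal_pow I n y -> ideal_pow I (m + n) (x * y).
Proof.
elim: m x => [|m IH] x Hx Hy; first by rewrite add0n; apply: ipMl.
rewrite addSn; case: Hx => s [Hs ->]; exists [seq (p.1, p.2 * y) | p <- s]; split.
  move=> p /mapP [q qs ->] /=; have [H1 H2] := Hs q qs; split; auto.
by rewrite big_map mulr_suml; apply: eq_bigr => p _ /=; rewrite mulrA.
Qed.

Lemma ip1 x : I x -> ideal_pow I 1 x.
Proof.
move=> Hx; exists [:: (x, 1)]; split; last by rewrite big_seq1 mulr1.
by move=> p; rewrite inE => /eqP -> /=.
Qed.

End IP.

Lemma ip_mono (T : comPzRingType) (I J : T -> Prop) n t :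
  (forall x, J x -> I x) -> ideal_pow J n t -> ideal_pow I n t.
Proof.
move=> HJI; elim: n t => // n IH t [s [Hs ->]]; exists s; split => // p ps.
by have [H1 H2] := Hs p ps; split; auto.
Qed.

Lemma ic_mono (T : comPzRingType) (I J : T -> Prop) t :
  (forall x, J x -> I x) -> int_closure J t -> int_closure I t.
Proof.
move=> HJI [n [a [Hn [Ha He]]]]; exists n, a; split => //; split => // i Hi.
exact: ip_mono HJI (Ha i Hi).
Qed.

Lemma ic_triv (T : comPzRingType) (I : T -> Prop) t : (1 : T) = 0 -> int_closure I t.
Proof.
move=> h10; exists 1%N, (fun _ => 0); split => //; split.
  by move=> i _; apply: ip0.
by rewrite -[LHS]mulr1 h10 mulr0.
Qed.

Definition ic' (T : comPzRingType) (I : T -> Prop) (u : T) :=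
  exists n (b : nat -> T), (0 < n)%N /\ (forall j, (j < n)%N -> ideal_pow I (n - j) (b j)) /\
    u ^+ n + \sum_(j < n) b j * u ^+ j = 0.

Lemma sum_rev (T : comPzRingType) n (F : nat -> T) :
  \sum_(1 <= i < n.+1) F i = \sum_(j < n) F (n - j)%N.
Proof.
rewrite big_nat_rev big_add1 /= big_mkord; apply: eq_bigr => j _; congr F.
Qed.

Lemma ic_ic' (T : comPzRingType) (I : T -> Prop) u : int_closure I u <-> ic' I u.
Proof.
split.
  move=> [n [a [Hn [Ha He]]]]; exists n, (fun j => a (n - j)%N); split => //; split.
    move=> j Hj; apply: Ha; apply/andP; split; rewrite ?subn_gt0 //; exact: leq_subr.
  rewrite sum_rev in He; rewrite -[RHS]He; congr (_ + _); apply: eq_bigr => j _.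
  by rewrite subKn // ltnW.
move=> [n [b [Hn [Hb He]]]]; exists n, (fun i => b (n - i)%N); split => //; split.
  move=> i /andP [H1 H2]; have := Hb (n - i)%N; rewrite subKn //; apply.
  by rewrite -subn_gt0 subKn.
rewrite sum_rev -[RHS]He; congr (_ + _); apply: eq_bigr => j _.
by rewrite subKn // ltnW.
Qed.

Lemma ip_nzw (T : comPzRingType) (h : (1:T) != 0) (I : T -> Prop) n x :
  ideal_pow (T := nzw h) I n x <-> ideal_pow (T := T) I n x.
Proof.
elim: n x => [|n IH] x; first by [].
split=> [[s [Hs e]]|[s [Hs e]]]; exists s; (split; last exact: e);
  move=> p ps; have [H1 H2] := Hs p ps; split => //; exact/IH.
Qed.

Lemma ic_nzw (T : comPzRingType) (h : (1:T) != 0) (I : T -> Prop) u :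
  int_closure (T := nzw h) I u <-> int_closure (T := T) I u.
Proof.
split=> [[n [a [Hn [Ha e]]]]|[n [a [Hn [Ha e]]]]]; exists n, a; (split => //; split; last exact: e);
  move=> i Hi; exact/ip_nzw/Ha.
Qed.
Section Rees.
Variables (T : comNzRingType) (I : T -> Prop).
Hypothesis I0 : I 0.
Hypothesis IB : forall x y, I x -> I y -> I (x - y).
Hypothesis IM : forall a x, I x -> I (a * x).

Definition reesP (p : {poly T}) := forall i, ideal_pow I i p`_i.

Lemma reesPc : reesP 1 /\ (forall x y, reesP x -> reesP y -> reesP (x - y)) /\
  (forall x y, reesP x -> reesP y -> reesP (x * y)).
Proof.
split; [|split].
- move=> i; rewrite coef1; case: i => [|i] //=.
  exact: (ip0 I i.+1).
- by move=> x y Hx Hy i; rewrite coefB; apply: ipB.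
- move=> x y Hx Hy i; rewrite coefM.
  apply: (big_ind (ideal_pow I i)); first exact: ip0.
    by move=> a b; apply: ipD.
  move=> j _; have := ipM IM (Hx j) (Hy (i - j)%N).
  by rewrite subnKC // -ltnS.
Qed.

Let sv := svalr reesPc.

Lemma rees_int p : reesP p -> integralOver sv p.
Proof. by move=> /(svalr_im reesPc) [y <-]; apply: integral_id. Qed.

Lemma int_term t k : ideal_pow I k t -> integralOver sv (t%:P * 'X^k).
Proof.
move=> Ht; apply: rees_int => i; rewrite coefMXn coefC.
case: (ltngtP i k) => [lt|gt|->]; first exact: ip0.
  rewrite ifF; first exact: ip0.
  by apply/negbTE; rewrite subn_eq0 -ltnNge.
by rewrite subnn eqxx.
Qed.

Lemma key (J : T -> Prop) (HJ : forall t, J t -> integralOver sv (t%:P * 'X)) k b :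
  ideal_pow J k b -> integralOver sv (b%:P * 'X^k).
Proof.
elim: k b => [|k IH] b Hb.
  by have := int_term (k := 0) (t := b) Logic.I.
case: Hb => s [Hs ->]; rewrite big_seq rmorph_sum /= big_distrl /=.
apply: (big_ind (integralOver sv)); [exact: integral0 | exact: integral_add | ].
move=> p ps; have [H1 H2] := Hs p ps; rewrite rmorphM /= exprS mulrACA.
exact: integral_mul (HJ _ H1) (IH _ H2).
Qed.

Lemma root_int (J : T -> Prop) (HJ : forall t, J t -> integralOver sv (t%:P * 'X)) u :
  ic' J u -> integralOver sv (u%:P * 'X).
Proof.
move=> [n [b [Hn [Hb He]]]].
pose Q : {poly {poly T}} :=
  \poly_(j < n.+1) (if (j < n)%N then (b j)%:P * 'X^(n - j) else 1).
have mQ : Q \is monic by apply/monicP; rewrite lead_coef_poly ?ltnn ?oner_neq0.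
have iQ : {in Q : seq _, integralRange sv}.
  apply/integral_poly => i; rewrite coef_poly; case: ifP => _; last exact: integral0.
  case: ifP => Hi; last exact: integral1.
  exact: key HJ _ _ (Hb i Hi).
apply: integral_root_monic mQ _ iQ.
rewrite rootE horner_poly big_ord_recr /= ltnn mul1r.
have E : forall j : 'I_n,
  (if (j < n)%N then (b j)%:P * 'X^(n - j) else 1) * (u%:P * 'X) ^+ j = (b j * u ^+ j)%:P * 'X^n.
  move=> j; rewrite ltn_ord exprMn -rmorphXn mulrACA -exprD subnK ?(ltnW (ltn_ord j)) //.
  by rewrite -rmorphM.
under eq_bigr => j _ do rewrite E.
rewrite -big_distrl /= -rmorph_sum exprMn -rmorphXn -mulrDl -rmorphD addrC He.
by rewrite mul0r.
Qed.

Lemma int_root u : integralOver sv (u%:P * 'X) -> ic' I u.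
Proof.
move=> [p mp rp].
have mP : map_poly sv p \is monic := monic_map sv mp.
have [n sP] : exists n, size (map_poly sv p) = n.+1.
  exists (size (map_poly sv p)).-1; rewrite prednK // lt0n size_poly_eq0.
  exact: monic_neq0.
have lP : (map_poly sv p)`_n = 1.
  by move/monicP: mP; rewrite lead_coefE sP.
move: rp; rewrite rootE horner_coef sP big_ord_recr /= lP mul1r => /eqP E.
have Hn : (0 < n)%N.
  case: (posnP n) => // n0; move: E; rewrite n0 big_ord0 add0r expr0 => /eqP.
  by rewrite oner_eq0.
have := congr1 (fun q : {poly T} => q`_n) E; rewrite coef0 coefD coef_sum /=.
under eq_bigr => i _ do
  rewrite exprMn -rmorphXn mulrA coefMXn ltnNge (ltnW (ltn_ord i)) /= coefMC.
rewrite exprMn -rmorphXn coefMXn ltnn subnn coefC eqxx => He.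
exists n, (fun j => ((map_poly sv p)`_j)`_(n - j)); split => //; split.
  move=> j _; rewrite coef_map; exact: (svalr_P (p`_j) (n - j)%N).
by rewrite addrC.
Qed.

Lemma rees_iff u : int_closure I u <-> integralOver sv (u%:P * 'X).
Proof.
split; last by move=> /int_root /ic_ic'.
move=> /ic_ic'; apply: root_int => t It.
by have := int_term (ip1 It); rewrite expr1.
Qed.

Lemma ic_trans (J : T -> Prop) (HJ : forall t, J t -> int_closure I t) u :
  int_closure J u -> int_closure I u.
Proof.
move=> /ic_ic' H; apply/rees_iff; apply: root_int H => t /HJ /rees_iff //.
Qed.

Lemma ic0 : int_closure I 0.
Proof. by apply/rees_iff; rewrite polyC0 mul0r; exact: integral0. Qed.

Lemma icB x y : int_closure I x -> int_closure I y -> int_closure I (x - y).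
Proof.
move=> /rees_iff Hx /rees_iff Hy; apply/rees_iff.
by rewrite rmorphB mulrBl; exact: integral_sub.
Qed.

Lemma icM a x : int_closure I x -> int_closure I (a * x).
Proof.
move=> /rees_iff Hx; apply/rees_iff; rewrite rmorphM -mulrA.
apply: integral_mul Hx.
by have := int_term (k := 0) (t := a) Logic.I; rewrite expr0 mulr1.
Qed.

End Rees.
Section Quot.
Local Open Scope quotient_scope.
Variables (T : comNzRingType) (I : T -> Prop).
Hypothesis H : (I 0 /\ (forall x y, I x -> I y -> I (x - y)) /\ (forall a x, I x -> I (a * x)))
   /\ ~ int_closure I 1.
Definition Ib : {pred T} := let _ := H in fun t => pdec (int_closure I t).
Lemma Ib_ideal : idealr_closed Ib.
Proof.
case: H => [[I0 [IB IM]] N1]; rewrite /Ib /in_mem /=.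
split.
- by apply/pdecP; apply: ic0.
- by apply/pdecP.
- move=> a u v /pdecP Hu /pdecP Hv; apply/pdecP.
  rewrite -[v]opprK -[- v]sub0r; apply: icB => //; first exact: icM.
  by apply: icB => //; apply: ic0.
Qed.
HB.instance Definition _ := isIdealr.Build T Ib Ib_ideal.
Definition Qt := {ideal_quot Ib}.
Definition piQ : {rmorphism T -> Qt} := GRing.RMorphism.clone _ _ (\pi_Qt) _.
Lemma piQ_eq0 t : piQ t = 0 -> int_closure I t.
Proof.
move=> e.
have : t - 0 \in Ib.
  rewrite Quotient.idealrBE; apply/eqP. rewrite /piQ /= in e. rewrite -pi_zeror in e. exact: e.
by rewrite subr0 /Ib /in_mem /= => /pdecP.
Qed.
End Quot.
Lemma comp_ex (A B C : comPzRingType) (f : {rmorphism A -> B}) (g : {rmorphism B -> C}) :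
  exists k : {rmorphism A -> C}, forall x, k x = g (f x).
Proof. by exists (g \o f : {rmorphism A -> C}). Qed.

Lemma comp_ex2 (A : comPzRingType) (B : comPzRingType) (h : (1 : B) != 0) (C : comNzRingType)
  (f : {rmorphism A -> B}) (g : {rmorphism nzw h -> C}) :
  exists k : {rmorphism A -> C}, forall x, k x = g (f x).
Proof. by exists (g \o f : {rmorphism A -> C}). Qed.

Unset Implicit Arguments. Set Strict Implicit.
Theorem mainTheorem1
  (R B : comPzRingType) (tau : {rmorphism R -> B}) (A : B -> Prop)
  (A_tau : forall r, A (tau r))
  (A_sub : forall x y, A x -> A y -> A (x - y))
  (A_mul : forall x y, A x -> A y -> A (x * y))
  (T1 : comPzRingType) (i1 i2 : {rmorphism B -> T1})
  (hT1 : is_tensor (fun b => exists r, b = tau r) i1 i2)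
  (T2 : comPzRingType) (k1 k2 : {rmorphism B -> T2})
  (hT2 : is_tensor A k1 k2)
  (phi : {rmorphism T1 -> T2})
  (phi1 : forall b, phi (i1 b) = k1 b) (phi2 : forall b, phi (i2 b) = k2 b) :
  (forall a, A a -> lip_sat i1 i2 phi a) /\
  (forall (T3 : comPzRingType) (l1 l2 : {rmorphism B -> T3}),
     is_tensor (lip_sat i1 i2 phi) l1 l2 ->
     forall psi : {rmorphism T1 -> T3},
       (forall b, psi (i1 b) = l1 b) -> (forall b, psi (i2 b) = l2 b) ->
       forall x, lip_sat i1 i2 psi x <-> lip_sat i1 i2 phi x).
Proof.
have part1 : forall a, A a -> lip_sat i1 i2 phi a.
  move=> a Aa; exists 1%N, (fun _ => - (i1 a - i2 a)); split => //; split.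
    move=> i /andP [H1 H2]; have -> : i = 1%N by apply/eqP; rewrite eqn_leq H2 H1.
    apply: ip1.
    by rewrite rmorphN rmorphB /= phi1 phi2 (hT2.1 a Aa) subrr oppr0.
  by rewrite big_nat1 subnn expr0 mulr1 expr1 subrr.
split => // T3 l1 l2 hT3 psi psi1 psi2 x.
have Htau : forall r, i1 (tau r) = i2 (tau r) by move=> r; apply: hT1.1; exists r.
have hl : forall a, lip_sat i1 i2 phi a -> l1 a = l2 a := hT3.1.
split; last first.
  have [h2 [[h21 h22] _]] := hT2.2 T3 l1 l2 (fun a Aa => hl a (part1 a Aa)).
  have [h0 [[h01 h02] U]] := hT1.2 T3 l1 l2 (fun s '(ex_intro r e) =>
                                  hl _ (part1 _ (eq_ind_r A (A_tau r) e))).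
  have [c Hc] := comp_ex phi h2.
  have Hpsi : forall t, psi t = h2 (phi t).
    move=> t; rewrite (U psi psi1 psi2) -(U c) // => b; by rewrite Hc ?phi1 ?phi2.
  apply: ic_mono => t /= e; by rewrite Hpsi e rmorph0.
case: (eqVneq (1 : T1) 0) => [h10 | h].
  by move=> _; apply: ic_triv.
pose I : nzw h -> Prop := fun t => phi t = 0.
have I0 : I 0 by rewrite /I rmorph0.
have IB : forall x y, I x -> I y -> I (x - y).
  by move=> u v; rewrite /I => Hu Hv; rewrite (rmorphB phi) /= Hu Hv subr0.
have IM : forall a x, I x -> I (a * x).
  by move=> a u; rewrite /I => Hu; rewrite (rmorphM phi) /= Hu mulr0.
case: (classic (int_closure I 1)) => [ic1 | nic1].
  move=> _; have := icM IM (i1 x - i2 x) ic1; rewrite mulr1 => H; exact: (proj1 (@ic_nzw _ h _ _) H).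
have Hq : (I 0 /\ (forall x y, I x -> I y -> I (x - y)) /\ (forall a x, I x -> I (a * x)))
   /\ ~ int_closure I 1 by [].
pose pi := piQ Hq.
have [f1 Hf1] := comp_ex2 i1 pi.
have [f2 Hf2] := comp_ex2 i2 pi.
have pi0 : forall t, int_closure I t -> pi t = 0.
  move=> t Ht; have : t - 0 \in Ib Hq by rewrite subr0 /Ib /in_mem /=; apply/pdecP.
  rewrite Quotient.idealrBE => /eqP e; rewrite /pi /piQ /= e; exact: pi_zeror.
have [h3 [[h31 h32] _]] := hT3.2 (Qt Hq) f1 f2 (fun a Ha =>
   ltac:(apply/eqP; rewrite Hf1 Hf2 -subr_eq0 -rmorphB /=; apply/eqP; apply: pi0; exact/(@ic_nzw _ h _ _))).
have [h0 [[h01 h02] U]] := hT1.2 (Qt Hq) f1 f2 (fun s '(ex_intro r e) =>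
   ltac:(by rewrite Hf1 Hf2 e Htau)).
have [c Hc] := comp_ex psi h3.
have [c' Hc'] := comp_ex2 (GRing.RMorphism.clone _ _ (@idfun T1) _) pi.
have Hpi : forall t, pi t = h3 (psi t).
  move=> t.
  have e1 : c' t = h0 t by apply: U => b; rewrite Hc' ?Hf1 ?Hf2.
  have e2 : c t = h0 t by apply: U => b; rewrite Hc ?psi1 ?psi2 ?h31 ?h32.
  by rewrite Hc' in e1; rewrite Hc in e2; rewrite e2; exact: e1.
move=> Hx; rewrite /lip_sat; apply/(@ic_nzw _ h _ _).
apply: (ic_trans IM (J := fun t : nzw h => psi t = 0)); last exact/(@ic_nzw _ h _ _).
move=> t e; apply: (@piQ_eq0 _ _ Hq); by rewrite -/pi Hpi e rmorph0.
Qed.
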